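(* Let $K$ be the $2$-uniform tiling of the plane whose vertex types are $[3^3,4^2]$ and $[3^1,4^1,6^1,4^1]$. If $X$ is a map on the torus that is a quotient $X=K/\Gamma$ of $K$, then the vertices of $X$ form at most $6$ orbits under ${\rm Aut}(X)$.
   Context: A map is a polyhedral map: a cellular embedding of a connected graph in a closed surface such that the intersection of any two distinct faces is empty, a single vertex, or a single edge. For a vertex $u$, the faces containing $u$ form a cyclic sequence (the face-cycle at $u$); if this cyclic sequence consists of consecutive blocks of $n_1$ $p_1$-gons, then $n_2$ $p_2$-gons, ..., then $n_k$ $p_k$-gons, with cyclically consecutive $p_i$ distinct, then $u$ is said to have type $[p_1^{n_1},\dots,p_k^{n_k}]$ (defined up to cyclic shift and reversal). A $2$-uniform tiling is an edge-to-edge tiling of the Euclidean plane $\mathbb{R}^2$ by regular polygons whose symmetry group has exactly two orbits on the set of vertices; viewed as a map on the plane, its vertices have (at most) two types, listed as $[W;Z]$. (Up to isomorphism there are exactly $20$ such tilings; there is exactly one with the vertex types named in the claim.) For a map $K$ on the plane, a quotient of $K$ on the torus is a map $X$ on the torus together with a polyhedral covering map $\eta:K\to X$ with $X=K/\Gamma$, where $\Gamma\le {\rm Aut}(K)$ is a subgroup acting without fixed vertices, edges or faces and $K/\Gamma$ is homeomorphic to the torus. ${\rm Aut}(X)$ denotes the automorphism group of the map $X$, acting on its vertex set $V(X)$. *)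

(* Defs.v *)
From mathcomp Require Import all_boot all_algebra.
From Stdlib Require List.
Set Implicit Arguments. Unset Strict Implicit. Unset Printing Implicit Defensive.

(* Translation cells of the rosette lattice, in lattice coordinates w.r.t.
   a = (2+sqrt3, 0) and b = (2+sqrt3)(1/2, sqrt3/2). *)
Definition cell := (int * int)%type.
(* 12 vertices per cell: 0..5 = hexagon vertices h_k (angle 30+60k deg,
   type 3.4.6.4); 6..11 = outer square corners o_0^-,o_0^+,o_1^-,o_1^+,
   o_2^-,o_2^+ (type 3^3.4^2). *)
Definition V := (cell * 'I_12)%type.

Definition cadd (c d : cell) : cell := (c.1 + d.1, c.2 + d.2)%R.
Definition csub (c d : cell) : cell := (c.1 - d.1, c.2 - d.2)%R.
(* lattice vectors in the directions 0, 60, 120 degrees *)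
Definition dir (j : nat) : cell :=
  match j with 0 => (1%R, 0%R) | 1 => (0%R, 1%R) | _ => ((-1)%R, 1%R) end.

Definition vx (c : cell) (k : nat) : V := (c, inord k).
Definition hx (c : cell) (k : nat) : V := vx c (k %% 6).
(* outer corners o_j^- and o_j^+ of the square S_j on the hexagon edge
   h_{j-1} h_j (outer normal at angle 60j deg); for j >= 3 they are
   identified with corners of the neighbouring rosette. *)
Definition om (c : cell) (j : nat) : V :=
  let j := j %% 6 in
  if j < 3 then vx c (6 + 2 * j) else vx (csub c (dir (j - 3))) (7 + 2 * (j - 3)).
Definition op (c : cell) (j : nat) : V :=
  let j := j %% 6 in
  if j < 3 then vx c (7 + 2 * j) else vx (csub c (dir (j - 3))) (6 + 2 * (j - 3)).

(* The 15 faces owned by cell c, each as its counterclockwise boundary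
   cycle: 1 hexagon, 6 squares, 6 rosette triangles, 2 gap triangles. *)
Definition cell_faces (c : cell) : seq (seq V) :=
  [seq hx c k | k <- iota 0 6] ::
  [seq [:: hx c (j + 5); om c j; op c j; hx c j] | j <- iota 0 6] ++
  [seq [:: hx c j; op c j; om c j.+1] | j <- iota 0 6] ++
  [:: [:: op c 0; op (cadd c (dir 0)) 2; om c 1];
      [:: op c 1; om (cadd c (csub (dir 1) (dir 0))) 0; om c 2]].

Definition Kface (s : seq V) : Prop := exists c : cell, s \in cell_faces c.

Definition dih_eq (T : Type) (s t : seq T) : Prop :=
  exists k, t = rot k s \/ t = rot k (rev s).
Definition cyc_adj (T : Type) (s : seq T) (a b : T) : Prop :=
  exists k l, rot k s = a :: b :: l \/ rot k s = b :: a :: l.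

Definition Kedge (u v : V) : Prop := exists s, Kface s /\ cyc_adj s u v.

Definition face_pres (T : Type) (F : seq T -> Prop) (f : T -> T) : Prop :=
  forall s, F s -> exists t, F t /\ dih_eq (map f s) t.
Definition is_map_aut (T : Type) (F : seq T -> Prop) (f : T -> T) : Prop :=
  exists g : T -> T, cancel f g /\ cancel g f /\ face_pres F f /\ face_pres F g.

(* orientation-preserving on K: faces are sent to faces with the same
   (counterclockwise) orientation *)
Definition K_orient_pres (f : V -> V) : Prop :=
  forall s, Kface s -> exists t k, Kface t /\ map f s = rot k t.

Definition orb (G : (V -> V) -> Prop) (v w : V) : Prop := exists g, G g /\ g v = w.

Record torus_quotient_group (G : (V -> V) -> Prop) : Prop := {
  tq_aut   : forall g, G g -> is_map_aut Kface g;
  tq_id    : G id;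
  tq_comp  : forall f g, G f -> G g -> G (f \o g);
  tq_inv   : forall f, G f -> exists g, G g /\ cancel f g /\ cancel g f;
  tq_fixV  : forall g v, G g -> g v = v -> g =1 id;
  tq_fixE  : forall g u v, G g -> Kedge u v ->
               (g u = u /\ g v = v) \/ (g u = v /\ g v = u) -> g =1 id;
  tq_fixF  : forall g s, G g -> Kface s -> dih_eq (map g s) s -> g =1 id;
  (* K/Gamma is homeomorphic to the torus: compact (finitely many vertex
     orbits) and orientable (Gamma orientation preserving) *)
  tq_cocompact : exists L : seq V, forall v, exists w, w \in L /\ orb G w v;
  tq_orient : forall g, G g -> K_orient_pres g
}.

Definition VX (G : (V -> V) -> Prop) := { P : V -> Prop | exists v, P = orb G v }.
Definition cls (G : (V -> V) -> Prop) (v : V) : VX G :=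
  exist (fun P => exists w, P = orb G w) (orb G v) (ex_intro _ v erefl).
Definition Xface (G : (V -> V) -> Prop) (t : seq (VX G)) : Prop :=
  exists s, Kface s /\ t = map (@cls G) s.

Definition polyhedral (T : Type) (F : seq T -> Prop) : Prop :=
  (forall s, F s -> List.NoDup s) /\
  (forall s t, F s -> F t -> ~ dih_eq s t ->
     (forall x, ~ (List.In x s /\ List.In x t)) \/
     (exists a, forall x, List.In x s /\ List.In x t <-> x = a) \/
     (exists a b, a <> b /\ (forall x, List.In x s /\ List.In x t <-> x = a \/ x = b) /\
                  cyc_adj s a b /\ cyc_adj t a b)).

(* Main.v *)
Require Import Defs.
From mathcomp Require Import all_boot all_algebra zify ring.
From Stdlib Require List FunctionalExtensionality.
Set Implicit Arguments. Unset Strict Implicit. Unset Printing Implicit Defensive.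
Import GRing.Theory.

Definition ordc (k : nat) : 'I_12 :=
  (if k < 12 as b return (k < 12) = b -> 'I_12 then fun H => Ordinal H else fun _ => ord0)
  (erefl (k < 12)).
Lemma ordcE k : ordc k = inord k.
Proof.
apply: val_inj; rewrite /ordc /=.
move: (erefl (k < 12)); case: {2 3}(k < 12) => H /=.
  by rewrite inordK.
by rewrite /inord /insubd insubF.
Qed.
Definition vxc (c : cell) (k : nat) : V := (c, ordc k).
Lemma vx_eq : vx = vxc.
Proof. by apply: FunctionalExtensionality.functional_extensionality => c;
  apply: FunctionalExtensionality.functional_extensionality => k; rewrite /vxc ordcE. Qed.

Definition c0 : cell := (0%R, 0%R).
Definition tr (d : cell) (v : V) : V := (cadd v.1 d, v.2).
Definition F0 := cell_faces c0.

Lemma cellP (a b c d : int) : a = c -> b = d -> (a, b) = (c, d).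
Proof. by move=> -> ->. Qed.

Lemma tr_tr a b v : tr a (tr b v) = tr (cadd b a) v.
Proof. case: v => [[x y] i]; rewrite /tr /cadd /=; congr (_, _); apply: cellP; ring. Qed.
Lemma tr0 v : tr c0 v = v.
Proof. case: v => [[x y] i]; rewrite /tr /cadd /=; congr (_, _); apply: cellP; ring. Qed.
Lemma tr_inj d : injective (tr d).
Proof.
move=> [[x y] i] [[x' y'] i']; rewrite /tr /cadd /= => [[E1 E2 ->]].
congr (_, _); apply: cellP.
  by have := congr1 (fun z => z - d.1)%R E1; rewrite !addrK.
by have := congr1 (fun z => z - d.2)%R E2; rewrite !addrK.
Qed.

Lemma tr_hx d c k : tr d (hx c k) = hx (cadd c d) k.
Proof. by []. Qed.
Lemma tr_om d c j : tr d (om c j) = om (cadd c d) j.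
Proof.
rewrite /om; case: ifP => _ //.
rewrite /tr /vx /=; congr (_, _); rewrite /csub /cadd /=; apply: cellP; ring.
Qed.
Lemma tr_op d c j : tr d (op c j) = op (cadd c d) j.
Proof.
rewrite /op; case: ifP => _ //.
rewrite /tr /vx /=; congr (_, _); rewrite /csub /cadd /=; apply: cellP; ring.
Qed.
Lemma caddAC c d e : cadd (cadd c d) e = cadd (cadd c e) d.
Proof. rewrite /cadd /=; apply: cellP; ring. Qed.
Lemma cadd0c c : cadd c0 c = c.
Proof. case: c => x y; rewrite /cadd /=; apply: cellP; ring. Qed.

Lemma cell_faces_tr d c : map (map (tr d)) (cell_faces c) = cell_faces (cadd c d).
Proof.
rewrite /cell_faces map_cons !map_cat; congr (_ :: _ ++ _ ++ _);
  rewrite /= ?tr_om ?tr_op //.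
by rewrite caddAC (caddAC c _ d).
Qed.

Lemma cell_facesE c : cell_faces c = map (map (tr c)) F0.
Proof. by rewrite cell_faces_tr cadd0c. Qed.

Lemma KfaceE s : Kface s <-> exists c s0, s0 \in F0 /\ s = map (tr c) s0.
Proof.
split.
  move=> [c]; rewrite cell_facesE => /mapP [s0 H ->]; by exists c, s0.
move=> [c [s0 [H ->]]]; exists c; rewrite cell_facesE; exact: map_f.
Qed.

Lemma Kface_tr d s : Kface s -> Kface (map (tr d) s).
Proof.
move=> /KfaceE [c [s0 [H ->]]]; apply/KfaceE; exists (cadd c d), s0; split => //.
by rewrite -map_comp; apply: eq_map => v /=; rewrite tr_tr.
Qed.

Definition x0 : V := vxc c0 0.
Definition deu_ok : bool :=
 all (fun s1 => all (fun s2 => all (fun a => all (fun b =>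
   let r1 := rot a s1 in let r2 := rot b s2 in
   let r2' := map (tr (csub (head x0 r1).1 (head x0 r2).1)) r2 in
   (take 2 r1 == take 2 r2') ==> (r1 == r2')) (iota 0 (size s2))) (iota 0 (size s1))) F0) F0.
Lemma deu_okT : deu_ok.
Proof. rewrite /deu_ok /F0 /cell_faces /hx /om /op vx_eq. vm_compute. reflexivity. Qed.
Lemma size_okT : all (fun s => 2 < size s) F0.
Proof. rewrite /F0 /cell_faces /hx /om /op vx_eq. vm_compute. reflexivity. Qed.

Lemma rot_norm (T : Type) (s : seq T) a : 0 < size s -> exists2 a', a' < size s & rot a s = rot a' s.
Proof.
move=> Hs; case: (ltnP a (size s)) => H; first by exists a.
by exists 0 => //; rewrite rot_oversize // rot0.
Qed.

Lemma tr_shift (p q c1 c2 : cell) : cadd p c1 = cadd q c2 ->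
  forall v, tr c2 v = tr c1 (tr (csub p q) v).
Proof.
case: p q c1 c2 => [p1 p2] [q1 q2] [a1 a2] [b1 b2]; rewrite /cadd /csub /= => [[E1 E2]] v.
rewrite tr_tr /cadd /=; congr (tr _ v); apply: cellP; lia.
Qed.

Lemma DEU t1 t2 a b x y l1 l2 : Kface t1 -> Kface t2 ->
  rot a t1 = x :: y :: l1 -> rot b t2 = x :: y :: l2 -> rot a t1 = rot b t2.
Proof.
move=> /KfaceE [c1 [s1 [H1 ->]]] /KfaceE [c2 [s2 [H2 ->]]].
have sz1 : 2 < size s1 by move/allP: size_okT => /(_ _ H1).
have sz2 : 2 < size s2 by move/allP: size_okT => /(_ _ H2).
rewrite -!map_rot.
have [a' Ha' ->] : exists2 a', a' < size s1 & rot a s1 = rot a' s1 by apply: rot_norm; apply: ltn_trans sz1.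
have [b' Hb' ->] : exists2 b', b' < size s2 & rot b s2 = rot b' s2 by apply: rot_norm; apply: ltn_trans sz2.
have := deu_okT; move/allP/(_ _ H1)/allP/(_ _ H2)/allP.
move/(_ a'); rewrite mem_iota add0n => /(_ Ha')/allP.
move/(_ b'); rewrite mem_iota add0n => /(_ Hb') /=.
have Ea : size (rot a' s1) = size s1 by rewrite size_rot.
have : size (rot b' s2) = size s2 by rewrite size_rot.
move=> Eb; case: (rot a' s1) Ea => [|x1 [|y1 m1]] Ea; try by rewrite -Ea in sz1.
case: (rot b' s2) Eb => [|x2 [|y2 m2]] Eb; try by rewrite -Eb in sz2.
rewrite /=; move=> Hc [Ex1 Ey1 _] [Ex2 Ey2 _].
have Esh := @tr_shift x1.1 x2.1 c1 c2.
have Ec : cadd x1.1 c1 = cadd x2.1 c2 by move: (congr1 fst Ex1) (congr1 fst Ex2) => /= -> ->.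
have Esh' := Esh Ec.
have Hx : tr (csub x1.1 x2.1) x2 = x1 by apply: (@tr_inj c1); rewrite -Esh' Ex1 Ex2.
have Hy : tr (csub x1.1 x2.1) y2 = y1 by apply: (@tr_inj c1); rewrite -Esh' Ey1 Ey2.
move: Hc; rewrite Hx Hy !take0 eqxx /= => /eqP [->].
rewrite -map_comp Ex1 Ex2 Ey1 Ey2; congr [:: _, _ & _]; apply: eq_map => v /=; by rewrite Esh'.
Qed.

Lemma rot_rot_ex (T : Type) (s : seq T) k k' : exists n, rot k (rot k' s) = rot n s.
Proof.
case: (leqP k' (size s)) => H'; last by exists k; rewrite (@rot_oversize _ k' s) // ltnW.
case: (leqP k (size s)) => H; last first.
  by exists k'; rewrite rot_oversize // size_rot ltnW.
by eexists; rewrite rot_add_mod.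
Qed.

Lemma ofm_comp f h : K_orient_pres f -> K_orient_pres h -> K_orient_pres (h \o f).
Proof.
move=> Hf Hh s Hs; have [t [k [Ht Ef]]] := Hf s Hs.
have [t' [k' [Ht' Et]]] := Hh t Ht.
have [n En] := rot_rot_ex t' k k'.
by exists t', n; split => //; rewrite map_comp Ef map_rot Et En.
Qed.

Lemma ofm_tr d : K_orient_pres (tr d).
Proof. by move=> s Hs; exists (map (tr d) s), 0; rewrite rot0; split => //; apply: Kface_tr. Qed.

Lemma Kface_F0 s : s \in F0 -> Kface s.
Proof. by move=> H; apply/KfaceE; exists c0, s; split => //; rewrite (eq_map tr0) map_id. Qed.

Definition ofm_check (f : V -> V) : bool :=
  all (fun s0 => has (fun t0 => has (fun k =>
     let r := rot k t0 in
     let d := csub (f (head x0 s0)).1 (head x0 r).1 in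
     map f s0 == map (tr d) r) (iota 0 (size t0))) F0) F0.

Lemma ofm_of_check f (cf : cell -> cell) : (forall c v, f (tr c v) = tr (cf c) (f v)) ->
  ofm_check f -> K_orient_pres f.
Proof.
move=> Hf Hc s /KfaceE [c [s0 [Hs0 ->]]].
move/allP: Hc => /(_ _ Hs0) /hasP [t0 Ht0 /hasP [k _ /eqP E]].
exists (map (tr (cf c)) (map (tr (csub (f (head x0 s0)).1 (head x0 (rot k t0)).1)) t0)), k.
split; first by do 2 apply: Kface_tr; apply: Kface_F0.
rewrite -!map_rot -E -!map_comp; apply: eq_map => v /=; exact: Hf.
Qed.

Definition rotc (c : cell) : cell := ((- c.2)%R, (c.1 + c.2)%R).
Definition rho0 (i : 'I_12) : V :=
  match val i with
  | 0 => vxc c0 1 | 1 => vxc c0 2 | 2 => vxc c0 3 | 3 => vxc c0 4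
  | 4 => vxc c0 5 | 5 => vxc c0 0 | 6 => vxc c0 8 | 7 => vxc c0 9
  | 8 => vxc c0 10 | 9 => vxc c0 11 | 10 => vxc ((-1)%R,0%R) 7 | _ => vxc ((-1)%R,0%R) 6 end.
Definition rho (v : V) : V := tr (rotc v.1) (rho0 v.2).

Lemma rho_tr c v : rho (tr c v) = tr (rotc c) (rho v).
Proof.
rewrite /rho tr_tr /=; congr (tr _ _).
case: c v => [a b] [[x y] i]; rewrite /rotc /cadd /=; apply: cellP; ring.
Qed.

Lemma rho_okT : ofm_check rho.
Proof. rewrite /ofm_check /F0 /cell_faces /hx /om /op vx_eq. vm_compute. reflexivity. Qed.

Lemma ofm_rho : K_orient_pres rho.
Proof. exact: ofm_of_check rho_tr rho_okT. Qed.

Lemma ofm_ext f g : f =1 g -> K_orient_pres f -> K_orient_pres g.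
Proof. by move=> E Hf s Hs; rewrite -(eq_map E); apply: Hf. Qed.

Lemma ofm_iter m : K_orient_pres (iter m rho).
Proof.
elim: m => [|m IH].
  by move=> s Hs; exists s, 0; rewrite rot0 (eq_map (g := id)) ?map_id.
by apply: (ofm_ext (f := rho \o iter m rho)) => // ; exact: ofm_comp IH ofm_rho.
Qed.

Lemma propag f A s k u v l : K_orient_pres f -> K_orient_pres A -> Kface s ->
  rot k s = u :: v :: l -> f u = A u -> f v = A v -> forall x, x \in s -> f x = A x.
Proof.
move=> Hf HA Hs Ek Eu Ev.
have [t1 [a [Ht1 E1]]] := Hf s Hs.
have [t2 [b [Ht2 E2]]] := HA s Hs.
have [a' Ea'] := rot_rot_ex t1 k a.
have [b' Eb'] := rot_rot_ex t2 k b.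
have R1 : rot a' t1 = f u :: f v :: map f l by rewrite -Ea' -E1 -map_rot Ek.
have R2 : rot b' t2 = f u :: f v :: map A l by rewrite -Eb' -E2 -map_rot Ek /= Eu Ev.
have := DEU Ht1 Ht2 R1 R2.
rewrite -Ea' -Eb' -E1 -E2 => /rot_inj Em.
by move: Em => /eq_in_map.
Qed.

Definition Hex c : seq V := [seq hx c k | k <- iota 0 6].
Definition Sq c j : seq V := [:: hx c (j + 5); om c j; op c j; hx c j].

Lemma Kface_Hex c : Kface (Hex c).
Proof. by exists c; rewrite /cell_faces inE eqxx. Qed.
Lemma Kface_Sq c j : j < 6 -> Kface (Sq c j).
Proof.
move=> Hj; exists c; rewrite /cell_faces inE mem_cat; apply/orP; right.
rewrite mem_cat; apply/orP; left; apply/mapP; exists j => //; by rewrite mem_iota.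
Qed.
Lemma hx_in_Hex c k : hx c k \in Hex c.
Proof.
have -> : hx c k = hx c (k %% 6) by rewrite /hx modn_mod.
by apply: map_f; rewrite mem_iota add0n ltn_pmod.
Qed.

Definition HexD (f A : V -> V) c := forall x, x \in Hex c -> f x = A x.

Lemma Sq_D f A c j : K_orient_pres f -> K_orient_pres A -> HexD f A c -> j < 6 ->
  forall x, x \in Sq c j -> f x = A x.
Proof.
move=> Hf HA HD Hj; apply: (@propag f A (Sq c j) 3 (hx c j) (hx c (j + 5))) => //.
- exact: Kface_Sq.
- by apply: HD; apply: hx_in_Hex.
- by apply: HD; apply: hx_in_Hex.
Qed.

Lemma rot_Hex c j : j < 6 -> exists r l, rot r (Hex c) = hx c (j + 5) :: hx c j :: l.
Proof.
case: j => [|[|[|[|[|[|j]]]]]] // _.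
- by exists 5; eexists; reflexivity.
- by exists 0; eexists; reflexivity.
- by exists 1; eexists; reflexivity.
- by exists 2; eexists; reflexivity.
- by exists 3; eexists; reflexivity.
- by exists 4; eexists; reflexivity.
Qed.

Lemma step_gen f A c c' j j' : K_orient_pres f -> K_orient_pres A -> HexD f A c ->
  j < 6 -> j' < 6 -> om c' j' = op c j -> op c' j' = om c j -> HexD f A c'.
Proof.
move=> Hf HA HD Hj Hj' E1 E2.
have D1 := Sq_D Hf HA HD Hj.
have Dom : f (om c j) = A (om c j) by apply: D1; rewrite !inE eqxx !orbT.
have Dop : f (op c j) = A (op c j) by apply: D1; rewrite !inE eqxx !orbT.
have D2 : forall x, x \in Sq c' j' -> f x = A x.
  apply: (@propag f A (Sq c' j') 1 (om c' j') (op c' j')) => //.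
  - exact: Kface_Sq.
  - by rewrite E1.
  - by rewrite E2.
have [r [l Er]] := rot_Hex c' Hj'.
apply: (@propag f A (Hex c') r (hx c' (j' + 5)) (hx c' j') l) => //.
- exact: Kface_Hex.
- by apply: D2; rewrite !inE eqxx.
- by apply: D2; rewrite !inE eqxx !orbT.
Qed.

Lemma step_a f A c : K_orient_pres f -> K_orient_pres A -> HexD f A c -> HexD f A (cadd c (dir 0)).
Proof.
move=> Hf HA HD; apply: (step_gen (j := 0) (j' := 3) Hf HA HD) => //;
  rewrite /om /op /= /vx; congr (_, _); case: c {HD} => x y; rewrite /csub /cadd /=; apply: cellP; ring.
Qed.
Lemma step_b f A c : K_orient_pres f -> K_orient_pres A -> HexD f A c -> HexD f A (cadd c (dir 1)).
Proof.
move=> Hf HA HD; apply: (step_gen (j := 1) (j' := 4) Hf HA HD) => //;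
  rewrite /om /op /= /vx; congr (_, _); case: c {HD} => x y; rewrite /csub /cadd /=; apply: cellP; ring.
Qed.
Lemma step_ma f A c : K_orient_pres f -> K_orient_pres A -> HexD f A c -> HexD f A (csub c (dir 0)).
Proof. by move=> Hf HA HD; apply: (step_gen (j := 3) (j' := 0) Hf HA HD). Qed.
Lemma step_mb f A c : K_orient_pres f -> K_orient_pres A -> HexD f A c -> HexD f A (csub c (dir 1)).
Proof. by move=> Hf HA HD; apply: (step_gen (j := 4) (j' := 1) Hf HA HD). Qed.

Lemma int_ind' (P : int -> Prop) : P 0%R -> (forall x, P x -> P (x + 1)%R) ->
  (forall x, P x -> P (x - 1)%R) -> forall x, P x.
Proof.
move=> H0 Hp Hm; case=> n.
  elim: n => [//|n IH]; have := Hp _ IH; congr P; lia.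
elim: n => [|n IH]; first by have := Hm _ H0; congr P; lia.
by have := Hm _ IH; congr P; lia.
Qed.

Lemma HexD_all f A : K_orient_pres f -> K_orient_pres A -> HexD f A c0 -> forall c, HexD f A c.
Proof.
move=> Hf HA H0.
have Hx : forall x, HexD f A (x, 0%R).
  apply: int_ind' => // x Hx.
    have := step_a Hf HA Hx; congr (HexD f A _); rewrite /cadd /=; apply: cellP; ring.
  have := step_ma Hf HA Hx; congr (HexD f A _); rewrite /csub /=; apply: cellP; ring.
move=> [x y]; move: y; apply: int_ind' => // y Hy.
  have := step_b Hf HA Hy; congr (HexD f A _); rewrite /cadd /=; apply: cellP; ring.
have := step_mb Hf HA Hy; congr (HexD f A _); rewrite /csub /=; apply: cellP; ring.
Qed.

Lemma rigid f A : K_orient_pres f -> K_orient_pres A -> HexD f A c0 -> f =1 A.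
Proof.
move=> Hf HA H0 [c i].
have HD : HexD f A c by apply: HexD_all.
have key : forall k, k < 12 -> f (vx c k) = A (vx c k).
  have Sq0 := Sq_D Hf HA HD (isT : 0 < 6).
  have Sq1 := Sq_D Hf HA HD (isT : 1 < 6).
  have Sq2 := Sq_D Hf HA HD (isT : 2 < 6).
  have Hh : forall k, k < 6 -> f (vx c k) = A (vx c k).
    by move=> k Hk; have := HD _ (@hx_in_Hex c k); rewrite /hx modn_small.
  case=> [|[|[|[|[|[|[|[|[|[|[|[|k]]]]]]]]]]]] // _;
  (by apply: Hh) ||
  (apply: Sq0; rewrite !inE eqxx ?orbT //) ||
  (apply: Sq1; rewrite !inE eqxx ?orbT //) ||
  (apply: Sq2; rewrite !inE eqxx ?orbT //).
have -> : (c, i) = vx c i by rewrite /vx inord_val.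
exact: key.
Qed.

Lemma iter_tr m p v : iter m rho (tr p v) = tr (iter m rotc p) (iter m rho v).
Proof. elim: m => [|m IH] /=; first by []. by rewrite IH rho_tr. Qed.

Lemma A_conj e m p r : cadd (iter m rotc p) e = cadd r p ->
  forall v, tr e (iter m rho (tr p v)) = tr p (tr r (iter m rho v)).
Proof. by move=> E v; rewrite iter_tr !tr_tr E. Qed.

Definition dihb (s t : seq V) : bool :=
  has (fun k => (t == rot k s) || (t == rot k (rev s))) (iota 0 (size s)).
Lemma dihbP s t : dihb s t -> dih_eq s t.
Proof. by case/hasP => k _ /orP [] /eqP ->; exists k; [left|right]. Qed.

Lemma fix_face_contra G (HG : torus_quotient_group G) g e m p r F : G g ->
  g =1 (fun v => tr e (iter m rho v)) -> cadd (iter m rotc p) e = cadd r p ->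
  Kface F -> dih_eq (map (fun v => tr r (iter m rho v)) F) F -> g =1 id.
Proof.
move=> Gg Eg Ep HF [k Hk].
apply: (tq_fixF HG Gg (Kface_tr p HF)).
have -> : map g (map (tr p) F) = map (tr p) (map (fun v => tr r (iter m rho v)) F).
  by rewrite (eq_map Eg) -!map_comp; apply: eq_map => v /=; rewrite (A_conj Ep).
exists k.
by case: Hk => E; [left | right]; rewrite {1}E map_rot ?map_rev.
Qed.

Lemma fix_edge_contra G (HG : torus_quotient_group G) g e m p r u v : G g ->
  g =1 (fun v => tr e (iter m rho v)) -> cadd (iter m rotc p) e = cadd r p ->
  Kedge u v -> tr r (iter m rho u) = v -> tr r (iter m rho v) = u -> g =1 id.
Proof.
move=> Gg Eg Ep [s [Hs [k [l Hkl]]]] Eu Ev.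
apply: (tq_fixE (u := tr p u) (v := tr p v) HG Gg).
  exists (map (tr p) s); split; first exact: Kface_tr.
  by exists k, (map (tr p) l); rewrite -map_rot; case: Hkl => ->; [left|right].
by right; rewrite !Eg !(A_conj Ep) Eu Ev.
Qed.

Definition hex0_ok : bool := all (fun s => (size s == 6) ==> (s == Hex c0)) F0.
Lemma hex0_okT : hex0_ok.
Proof. rewrite /hex0_ok /Hex /F0 /cell_faces /hx /om /op vx_eq. vm_compute. reflexivity. Qed.
Definition iter_ok : bool := all (fun m => (map (iter m rho) (Hex c0) == rot m (Hex c0))
   && ((iter m rho (vx c0 0)).2 == ordc m)) (iota 0 6).
Lemma iter_okT : iter_ok.
Proof. rewrite /iter_ok /Hex /hx vx_eq. vm_compute. reflexivity. Qed.

Lemma iter_fact m : m < 6 -> map (iter m rho) (Hex c0) = rot m (Hex c0) /\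
  (iter m rho (vx c0 0)).2 = ordc m.
Proof.
move=> Hm; move/allP: iter_okT => /(_ m); rewrite mem_iota add0n => /(_ Hm) /andP [/eqP -> /eqP ->].
by [].
Qed.

Lemma fin_contra g e m : 0 < m < 6 -> g =1 (fun v => tr e (iter m rho v)) -> g =1 id -> False.
Proof.
move=> /andP [Hm0 Hm] Eg Gid.
have := Gid (vx c0 0); rewrite Eg => /(congr1 snd) /=.
rewrite (iter_fact Hm).2 ordcE => /(congr1 val).
rewrite /= !inordK //; first by move=> E; rewrite E in Hm0.
exact: ltn_trans Hm _.
Qed.

Lemma face13 : Kface (nth [::] F0 13).
Proof. by apply: Kface_F0; apply: mem_nth. Qed.
Lemma face14 : Kface (map (tr (1%R, 0%R)) (nth [::] F0 14)).
Proof. by apply: Kface_tr; apply: Kface_F0; apply: mem_nth. Qed.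
Lemma edge0 : Kedge (vx c0 6) (vx c0 7).
Proof. exists (Sq c0 0); split; first exact: Kface_Sq. by exists 1; eexists; left; reflexivity. Qed.
Lemma edge1 : Kedge (vx c0 8) (vx c0 9).
Proof. exists (Sq c0 1); split; first exact: Kface_Sq. by exists 1; eexists; left; reflexivity. Qed.
Lemma edge2 : Kedge (vx (1%R, 0%R) 10) (vx (1%R, 0%R) 11).
Proof. exists (Sq (1%R, 0%R) 2); split; first exact: Kface_Sq. by exists 1; eexists; left; reflexivity. Qed.

Ltac cmp := rewrite /Hex /F0 /cell_faces /hx /om /op /c0 ?vx_eq; vm_compute; reflexivity.

Lemma gamma_tr G (HG : torus_quotient_group G) g : G g -> exists e, g =1 tr e.
Proof.
move=> Gg.
have [t [k [Ht Et]]] := tq_orient HG Gg (Kface_Hex c0).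
move/KfaceE: Ht => [e [s0 [Hs0 Ets]]].
have Hs6 : size s0 = 6.
  by move: (congr1 size Et); rewrite size_map size_rot Ets size_map.
have Es0 : s0 = Hex c0.
  by move/allP: hex0_okT => /(_ _ Hs0); rewrite Hs6 eqxx /= => /eqP.
subst t s0.
have [m Hm Ekm] : exists2 m, m < size (map (tr e) (Hex c0)) &
    rot k (map (tr e) (Hex c0)) = rot m (map (tr e) (Hex c0)) by apply: rot_norm.
rewrite size_map in Hm.
have HA : K_orient_pres (fun v => tr e (iter m rho v)).
  by apply: (ofm_ext (f := tr e \o iter m rho)) => //; apply: ofm_comp (ofm_iter m) (ofm_tr e).
have Eg : g =1 (fun v => tr e (iter m rho v)).
  apply: (rigid (tq_orient HG Gg) HA).
  move=> x Hx; move: x Hx; apply/eq_in_map.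
  by rewrite Et Ekm -map_rot -(iter_fact Hm).1 -map_comp.
case: m Hm Eg {Ekm HA} => [|m] Hm Eg; first by exists e.
exfalso; apply: (fin_contra (m := m.+1) (e := e) (g := g)) => //.
clear Et; case: e Eg => e1 e2 Eg.
case: m Hm Eg => [|[|[|[|[|m]]]]] // _ Eg.
-
  apply: (fix_face_contra (p := ((- e2)%R, (e1 + e2)%R)) (r := c0) (F := Hex c0) HG Gg Eg).
  + by rewrite /= /rotc /cadd /=; apply: cellP; lia.
  + exact: Kface_Hex.
  + apply: dihbP; cmp.
-
  set q := ((e1 - e2) %/ 3)%Z; set r1 := ((e1 - e2) %% 3)%Z.
  have Hd : (e1 - e2 = q * 3 + r1)%R by apply: divz_eq.
  have Hr0 : (0 <= r1)%R by apply: modz_ge0.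
  have Hr3 : (r1 < 3)%R by apply: ltz_pmod.
  have Ep : cadd (iter 2 rotc (q, (q + e2)%R)) (e1, e2) = cadd (r1, 0%R) (q, (q + e2)%R).
    by rewrite /= /rotc /cadd /=; apply: cellP; lia.
  have : r1 = 0%R \/ r1 = 1%R \/ r1 = 2%R by lia.
  case=> [E|[E|E]]; rewrite E in Ep.
  + apply: (fix_face_contra (F := Hex c0) HG Gg Eg Ep); first exact: Kface_Hex.
    apply: dihbP; cmp.
  + apply: (fix_face_contra (F := nth [::] F0 13) HG Gg Eg Ep); first exact: face13.
    apply: dihbP; cmp.
  + apply: (fix_face_contra HG Gg Eg Ep face14).
    apply: dihbP; cmp.
-
  set q1 := (e1 %/ 2)%Z; set r1 := (e1 %% 2)%Z.
  set q2 := (e2 %/ 2)%Z; set r2 := (e2 %% 2)%Z.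
  have Hd1 : (e1 = q1 * 2 + r1)%R by apply: divz_eq.
  have Hd2 : (e2 = q2 * 2 + r2)%R by apply: divz_eq.
  have Ha0 : (0 <= r1)%R by apply: modz_ge0.
  have Ha2 : (r1 < 2)%R by apply: ltz_pmod.
  have Hb0 : (0 <= r2)%R by apply: modz_ge0.
  have Hb2 : (r2 < 2)%R by apply: ltz_pmod.
  have Ep : cadd (iter 3 rotc (q1, q2)) (e1, e2) = cadd (r1, r2) (q1, q2).
    by rewrite /= /rotc /cadd /=; apply: cellP; lia.
  have : r1 = 0%R \/ r1 = 1%R by lia.
  have : r2 = 0%R \/ r2 = 1%R by lia.
  case=> E2; case=> E1; rewrite E1 E2 in Ep.
  + apply: (fix_face_contra (F := Hex c0) HG Gg Eg Ep); first exact: Kface_Hex.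
    apply: dihbP; cmp.
  + apply: (fix_edge_contra HG Gg Eg Ep edge0); cmp.
  + apply: (fix_edge_contra HG Gg Eg Ep edge1); cmp.
  + apply: (fix_edge_contra HG Gg Eg Ep edge2); cmp.
-
  set q := ((e2 - e1) %/ 3)%Z; set r2 := ((e2 - e1) %% 3)%Z.
  have Hd : (e2 - e1 = q * 3 + r2)%R by apply: divz_eq.
  have Hr0 : (0 <= r2)%R by apply: modz_ge0.
  have Hr3 : (r2 < 3)%R by apply: ltz_pmod.
  have Ep : cadd (iter 4 rotc ((q + e1)%R, q)) (e1, e2) = cadd (0%R, r2) ((q + e1)%R, q).
    by rewrite /= /rotc /cadd /=; apply: cellP; lia.
  have : r2 = 0%R \/ r2 = 1%R \/ r2 = 2%R by lia.
  case=> [E|[E|E]]; rewrite E in Ep.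
  + apply: (fix_face_contra (F := Hex c0) HG Gg Eg Ep); first exact: Kface_Hex.
    apply: dihbP; cmp.
  + apply: (fix_face_contra (F := nth [::] F0 13) HG Gg Eg Ep); first exact: face13.
    apply: dihbP; cmp.
  + apply: (fix_face_contra HG Gg Eg Ep face14).
    apply: dihbP; cmp.
-
  apply: (fix_face_contra (p := ((e1 + e2)%R, (- e1)%R)) (r := c0) (F := Hex c0) HG Gg Eg).
  + by rewrite /= /rotc /cadd /=; apply: cellP; lia.
  + exact: Kface_Hex.
  + apply: dihbP; cmp.
Qed.

Definition cneg (c : cell) : cell := ((- c.1)%R, (- c.2)%R).
Definition R := iter 3 rho.
Lemma R_tr e v : R (tr e v) = tr (cneg e) (R v).
Proof.
rewrite /R iter_tr; congr (tr _ _); case: e => a b; rewrite /= /rotc /cneg /=; apply: cellP; ring.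
Qed.
Lemma tr_comm a b v : tr a (tr b v) = tr b (tr a v).
Proof. rewrite !tr_tr; congr (tr _ _); rewrite /cadd; apply: cellP; ring. Qed.

Definition Fm (d : cell) (b : bool) (v : V) : V := tr d (if b then R v else v).

Lemma ofm_Fm d b : K_orient_pres (Fm d b).
Proof.
case: b; last exact: ofm_ext (ofm_tr d).
by apply: (ofm_ext (f := tr d \o R)) => //; apply: ofm_comp (ofm_iter 3) (ofm_tr d).
Qed.

Definition RR_ok : bool := all (fun i => R (R (vxc c0 i)) == vxc c0 i) (iota 0 12).
Lemma RR_okT : RR_ok. Proof. rewrite /RR_ok /R. vm_compute. reflexivity. Qed.
Lemma RR v : R (R v) = v.
Proof.
case: v => c i.
have -> : (c, i) = tr c (vxc c0 i).
  by rewrite /tr /vxc /= cadd0c ordcE inord_val.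
rewrite (R_tr c) (R_tr (cneg c)); have -> : cneg (cneg c) = c by case: c => x y; rewrite /cneg /=; apply: cellP; ring.
move/allP: RR_okT => /(_ i); rewrite mem_iota add0n ltn_ord => /(_ isT) /eqP -> //.
Qed.

Definition Fm_inv (d : cell) (b : bool) := if b then Fm d true else Fm (cneg d) false.
Lemma Fm_can d b : cancel (Fm d b) (Fm_inv d b).
Proof.
case: b => v; rewrite /Fm_inv /Fm.
  by rewrite R_tr RR tr_tr; rewrite -[RHS]tr0; congr (tr _ _); case: d => x y; rewrite /cadd /cneg /c0 /=; apply: cellP; ring.
by rewrite tr_tr -[RHS]tr0; congr (tr _ _); case: d => x y; rewrite /cadd /cneg /c0 /=; apply: cellP; ring.
Qed.
Lemma Fm_can' d b : cancel (Fm_inv d b) (Fm d b).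
Proof.
case: b => v; rewrite /Fm_inv /Fm.
  by rewrite R_tr RR tr_tr; rewrite -[RHS]tr0; congr (tr _ _); case: d => x y; rewrite /cadd /cneg /c0 /=; apply: cellP; ring.
by rewrite tr_tr -[RHS]tr0; congr (tr _ _); case: d => x y; rewrite /cadd /cneg /c0 /=; apply: cellP; ring.
Qed.
Lemma Fm_inv_Fm d b : exists d' b', Fm_inv d b = Fm d' b'.
Proof. by case: b; [exists d, true | exists (cneg d), false]. Qed.

Lemma G_inv G (HG : torus_quotient_group G) g e : G g -> g =1 tr e ->
  exists h, G h /\ h =1 tr (cneg e).
Proof.
move=> Gg Eg; have [h [Gh [c1 c2]]] := tq_inv HG Gg.
have [e' Eh] := gamma_tr HG Gh.
exists h; split => // v; rewrite Eh; congr (tr _ _).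
have := c1 (vx c0 0); rewrite Eg Eh tr_tr /vx /tr /= => [[]].
case: e e' {Eg Eh} => a b [a' b']; rewrite /cadd /cneg /= => E1 E2; apply: cellP; lia.
Qed.

Lemma resp_Fm G (HG : torus_quotient_group G) d b v w :
  orb G v w -> orb G (Fm d b v) (Fm d b w).
Proof.
move=> [g [Gg <-]]; have [e Eg] := gamma_tr HG Gg.
case: b; last first.
  by exists g; split => //; rewrite /Fm !Eg tr_comm.
have [h [Gh Eh]] := G_inv HG Gg Eg.
by exists h; split => //; rewrite /Fm Eh Eg R_tr tr_comm.
Qed.

From Stdlib Require ProofIrrelevance PropExtensionality ClassicalEpsilon.

Lemma orb_sym G (HG : torus_quotient_group G) v w : orb G v w -> orb G w v.
Proof.
move=> [g [Gg <-]]; have [h [Gh [c1 _]]] := tq_inv HG Gg; by exists h; split.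
Qed.
Lemma orb_trans G (HG : torus_quotient_group G) u v w : orb G u v -> orb G v w -> orb G u w.
Proof.
move=> [g [Gg <-]] [h [Gh <-]]; exists (h \o g); split => //; exact: tq_comp.
Qed.
Lemma orb_refl G (HG : torus_quotient_group G) v : orb G v v.
Proof. by exists id; split => //; exact: tq_id. Qed.

Lemma cls_eq G (HG : torus_quotient_group G) v w : orb G v w -> cls G v = cls G w.
Proof.
move=> H.
have E : orb G v = orb G w.
  apply: FunctionalExtensionality.functional_extensionality => x.
  apply: PropExtensionality.propositional_extensionality; split => Hx.
    exact: orb_trans (orb_sym HG H) Hx.
  exact: orb_trans H Hx.
rewrite /cls; move: (ex_intro _ v _) (ex_intro _ w _); rewrite E => p1 p2.
by rewrite (ProofIrrelevance.proof_irrelevance _ p1 p2).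
Qed.

Lemma cls_inv G (HG : torus_quotient_group G) v w : cls G v = cls G w -> orb G v w.
Proof. move/(congr1 (@proj1_sig _ _)) => /= ->; exact: orb_refl. Qed.

Lemma cls_surj G (x : VX G) : exists v, cls G v = x.
Proof.
case: x => P [v Ev]; exists v; rewrite /cls; move: (ex_intro _ v _) => p.
move: p; rewrite -Ev => p.
by rewrite (ProofIrrelevance.proof_irrelevance _ p (ex_intro _ v Ev)).
Qed.

Definition rep G (x : VX G) : V := proj1_sig (ClassicalEpsilon.constructive_indefinite_description _ (cls_surj x)).
Lemma cls_rep G (x : VX G) : cls G (rep x) = x.
Proof. rewrite /rep; case: ClassicalEpsilon.constructive_indefinite_description => v /= //. Qed.

Definition lift G (f : V -> V) (x : VX G) : VX G := cls G (f (rep x)).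

Lemma lift_cls G (HG : torus_quotient_group G) d b v : lift (Fm d b) (cls G v) = cls G (Fm d b v).
Proof.
rewrite /lift; apply: cls_eq => //; apply: resp_Fm => //.
by apply: cls_inv => //; rewrite cls_rep.
Qed.

Lemma dih_map (T U : Type) (h : T -> U) s t : dih_eq s t -> dih_eq (map h s) (map h t).
Proof. by move=> [k [->|->]]; exists k; [left|right]; rewrite map_rot ?map_rev. Qed.

Lemma face_pres_ofm f : K_orient_pres f -> face_pres Kface f.
Proof.
move=> Hf s Hs; have [t [k [Ht E]]] := Hf s Hs.
exists t; split => //; exists (size (map f s) - k); left.
by rewrite -/(rotr k (map f s)) E rotK.
Qed.

Lemma aut_lift G (HG : torus_quotient_group G) d b : is_map_aut (@Xface G) (lift (Fm d b)).
Proof.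
have [d' [b' Ei]] := Fm_inv_Fm d b.
have fp : forall d b, face_pres (@Xface G) (lift (Fm d b)).
  move=> d0 b0 t [s [Hs ->]].
  have [t' [Ht' Hd]] := face_pres_ofm (ofm_Fm d0 b0) Hs.
  exists (map (cls G) t'); split; first by exists t'.
  rewrite -map_comp (eq_map (g := cls G \o Fm d0 b0)); first by rewrite map_comp; exact: dih_map.
  by move=> v /=; rewrite lift_cls.
exists (lift (Fm d' b')); split; last split; last split => //.
- move=> x; have [v <-] := cls_surj x; rewrite !lift_cls // -Ei Fm_can.
  by [].
- move=> x; have [v <-] := cls_surj x; rewrite !lift_cls // -Ei Fm_can'.
  by [].
Qed.

Definition jtab (i : nat) : nat :=
  match i with 0 => 0 | 1 => 1 | 2 => 2 | 3 => 0 | 4 => 1 | 5 => 2 | 6 => 6 | 7 => 6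
  | 8 => 8 | 9 => 8 | 10 => 10 | _ => 10 end.
Definition btab (i : nat) : bool := i \in [:: 3; 4; 5; 7; 9; 11].
Definition dtab (i : nat) : cell :=
  match i with 7 => (1%R, 0%R) | 9 => (0%R, 1%R) | 11 => ((-1)%R, 1%R) | _ => c0 end.
Definition tab_ok : bool :=
  all (fun i => Fm (dtab i) (btab i) (vxc c0 (jtab i)) == vxc c0 i) (iota 0 12).
Lemma tab_okT : tab_ok. Proof. rewrite /tab_ok /Fm /R. vm_compute. reflexivity. Qed.

Lemma Fm_shift d c b w : Fm (cadd d c) b w = tr c (Fm d b w).
Proof. by rewrite /Fm tr_tr. Qed.

Theorem theorem1 (G : (V -> V) -> Prop) (HG : torus_quotient_group G)
  (HX : polyhedral (@Xface G)) :
  exists r : seq (VX G), size r <= 6 /\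
    forall x : VX G, exists y, List.In y r /\
      exists phi : VX G -> VX G, is_map_aut (@Xface G) phi /\ phi y = x.
Proof.
exists [:: cls G (vx c0 0); cls G (vx c0 1); cls G (vx c0 2); cls G (vx c0 6);
           cls G (vx c0 8); cls G (vx c0 10)]; split => // x.
have [[c i] <-] := cls_surj x.
have Ev : (c, i) = Fm (cadd (dtab i) c) (btab i) (vx c0 (jtab i)).
  rewrite Fm_shift vx_eq.
  move/allP: tab_okT => /(_ i); rewrite mem_iota add0n ltn_ord => /(_ isT) /eqP ->.
  by rewrite /tr /vxc /= cadd0c ordcE inord_val.
exists (cls G (vx c0 (jtab i))); split.
  by case: i {Ev} => [[|[|[|[|[|[|[|[|[|[|[|[|i]]]]]]]]]]]] Hi] //=; tauto.
exists (lift (Fm (cadd (dtab i) c) (btab i))); split; first exact: aut_lift.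
by rewrite lift_cls // Ev.
Qed.
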